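(* For every $m\in\mathbb{N}_0$ and every complex $s=\sigma+it$ with $\sigma>1/2$, $$\sum_{n=0}^{+\infty}\binom{n+m}{n}\left|\ell_n^{(m)}\right|\left|\frac{1-s}{s}\right|^n\le\left(\frac{1}{m!}\int_1^{+\infty}\frac{\{x\}^2\log^m x}{x^2}\mathrm{d}x\right)^{1/2}\left(\frac{|s|}{\sqrt{2\sigma-1}}\right)^{m+1}<\infty .$$
   Context: $\{x\}=x-\lfloor x\rfloor$; $\ell_n^{(m)}=-\delta_{n,0}+\sum_{k=0}^n\binom{n}{k}(-1)^{n-k}\sum_{j=0}^{m+k}\frac{\gamma_j}{j!}$, where $\delta_{n,k}$ is the Kronecker delta and $\gamma_j=\lim_{N\to\infty}\left(\sum_{k=1}^N\frac{\log^j k}{k}-\frac{\log^{j+1}N}{j+1}\right)$ are the Stieltjes constants. *)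

(* Defs.v *)
From Stdlib Require Import Reals.
From Coquelicot Require Import Coquelicot.
Open Scope R_scope.

(* fractional part {x} = x - floor x ; Int_part x = up x - 1 = floor x *)
Definition fracpart (x : R) : R := x - IZR (Int_part x).

(* N-th term (N >= 1, reindexed as N+1) of the sequence defining gamma_j:
   sum_{k=1}^{N} log^j k / k - log^{j+1} N / (j+1) *)
Definition stieltjes_seq (j : nat) (N : nat) : R :=
  sum_f_R0 (fun i => (ln (INR (i + 1))) ^ j / INR (i + 1)) N
  - (ln (INR (N + 1))) ^ (j + 1) / INR (j + 1).

Definition stieltjes (j : nat) : R := real (Lim_seq (stieltjes_seq j)).

Definition kdelta (n k : nat) : R := if Nat.eqb n k then 1 else 0.

Definition ell (m n : nat) : R :=
  - kdelta n 0 +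
  sum_f_R0 (fun k => Binomial.C n k * (-1) ^ (n - k) *
     sum_f_R0 (fun j => stieltjes j / INR (Factorial.fact j)) (m + k)) n.

(* Main.v *)
Require Import Defs.
From Stdlib Require Import Reals Lra Lia Classical Factorial ZArith.
From Coquelicot Require Import Coquelicot.
Open Scope R_scope.

Ltac side := repeat split; try (intro; nra); try nra; auto.

Lemma frac_bounds x : 0 <= fracpart x < 1.
Proof. unfold fracpart. destruct (base_Int_part x). lra. Qed.

Lemma frac_eq (k : nat) x : INR k < x < INR k + 1 -> fracpart x = x - INR k.
Proof.
  intros [h1 h2]. unfold fracpart, Int_part.
  assert (e : (Z.of_nat k + 1)%Z = up x).
  { apply tech_up; rewrite plus_IZR, <- INR_IZR_INZ; simpl; lra. }
  rewrite <- e, minus_IZR, plus_IZR, <- INR_IZR_INZ. simpl. ring.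
Qed.

Lemma gen_of_lim (f : R -> R) (F : R -> R) l :
  (forall b, 1 <= b -> is_RInt f 1 b (F b)) ->
  filterlim F (Rbar_locally p_infty) (locally l) ->
  is_RInt_gen f (at_point 1) (Rbar_locally p_infty) l.
Proof.
  intros H1 H2. unfold is_RInt_gen.
  apply filterlimi_lim_ext_loc with (f := fun ab : R * R => F (snd ab)).
  - exists (fun a => a = 1) (fun b => 1 < b).
    + reflexivity.
    + exists 1. auto.
    + intros a b -> hb. simpl. apply H1. lra.
  - eapply filterlim_comp. apply filterlim_snd. exact H2.
Qed.

Lemma le_lim (F : R -> R) l :
  (forall a b, 1 <= a <= b -> F a <= F b) ->
  filterlim F (Rbar_locally p_infty) (locally l) ->
  forall b, 1 <= b -> F b <= l.
Proof.
  intros Hm Hl b hb. destruct (Rle_lt_dec (F b) l) as [h|h]; auto.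
  exfalso. assert (he : 0 < F b - l) by lra.
  apply filterlim_locally with (eps := mkposreal _ he) in Hl.
  destruct Hl as [M HM].
  set (x := Rmax b (M + 1)).
  assert (hx : M < x) by (unfold x; generalize (Rmax_r b (M+1)); lra).
  specialize (HM x hx). assert (Fb : F b <= F x).
  { apply Hm. unfold x; split; auto. apply Rmax_l. }
  revert HM. unfold ball; simpl. unfold AbsRing_ball, abs, minus, plus, opp; simpl.
  intro HM. apply Rabs_lt_between in HM. simpl in HM. lra.
Qed.

Lemma lim_mono (F : R -> R) M :
  (forall a b, 1 <= a <= b -> F a <= F b) ->
  (forall b, 1 <= b -> F b <= M) ->
  exists l, filterlim F (Rbar_locally p_infty) (locally l).
Proof.
  intros Hm HM.
  set (E := fun y => exists b, 1 <= b /\ y = F b).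
  assert (hbd : bound E). { exists M. intros y [b [hb ->]]. auto. }
  assert (hE : exists y, E y). { exists (F 1), 1. split; [lra|auto]. }
  destruct (completeness E hbd hE) as [l [Hl1 Hl2]].
  exists l. apply filterlim_locally. intro eps.
  assert (exists b, 1 <= b /\ l - eps < F b) as [b0 [hb0 hF]].
  { apply NNPP. intro hn.
    assert (l <= l - eps).
    { apply Hl2. intros y [b [hb1 ->]].
      destruct (Rle_lt_dec (F b) (l - eps)) as [h|h]; auto.
      exfalso; apply hn; exists b; auto. }
    destruct eps; simpl in *; lra. }
  exists b0. intros x hx.
  assert (F b0 <= F x) by (apply Hm; lra).
  assert (F x <= l) by (apply Hl1; exists x; split; [lra|auto]).
  unfold ball; simpl. unfold AbsRing_ball, abs, minus, plus, opp; simpl.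
  apply Rabs_lt_between. destruct eps; simpl in *; lra.
Qed.

Lemma lim_inf_eps (f : R -> R) l :
  (forall eps, 0 < eps -> exists M, forall x, M < x -> Rabs (f x - l) < eps) ->
  filterlim f (Rbar_locally p_infty) (locally l).
Proof.
  intro H. apply filterlim_locally. intros [eps he].
  destruct (H eps he) as [M HM]. exists M. intros x hx.
  unfold ball; simpl. unfold AbsRing_ball, abs, minus, plus, opp; simpl. apply HM; auto.
Qed.

Lemma exp_mul_nat (n : nat) a : exp (INR n * a) = exp a ^ n.
Proof.
  induction n. simpl. rewrite Rmult_0_l, exp_0. auto.
  rewrite S_INR, Rmult_plus_distr_r, Rmult_1_l, exp_plus, IHn. simpl. ring.
Qed.

Lemma exp_ge_pow (n : nat) u : 0 <= u -> (u / INR (S n)) ^ (S n) <= exp u.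
Proof.
  intro hu. assert (hn : 0 < INR (S n)) by (apply lt_0_INR; lia).
  replace u with (INR (S n) * (u / INR (S n))) at 2 by (field; lra).
  rewrite exp_mul_nat. apply pow_incr. split.
  apply Rmult_le_pos; auto. left; apply Rinv_0_lt_compat; auto.
  set (a := u / INR (S n)).
  assert (0 <= a) by (unfold a; apply Rmult_le_pos; auto; left; apply Rinv_0_lt_compat; auto).
  destruct (Req_dec a 0). rewrite H0, exp_0. lra.
  generalize (exp_ineq1 a). intro h. assert (a < exp a) by (apply Rle_lt_trans with (1 + a) ; [lra | apply h; lra]). lra.
Qed.

Lemma lnlim (i : nat) :
  filterlim (fun b => ln b ^ i / b) (Rbar_locally p_infty) (locally 0).
Proof.
  apply lim_inf_eps. intros eps he.
  set (K := INR (S i) ^ (S i)).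
  assert (hK : 0 < K) by (unfold K; apply pow_lt, lt_0_INR; lia).
  exists (exp (K / eps)). intros x hx.
  assert (hx0 : 0 < x) by (generalize (exp_pos (K/eps)); lra).
  assert (hu : K / eps < ln x).
  { rewrite <- (ln_exp (K/eps)). apply ln_increasing; auto. apply exp_pos. }
  assert (hu0 : 0 < ln x) by (assert (0 < K/eps) by (apply Rdiv_lt_0_compat; auto); lra).
  set (u := ln x) in *.
  assert (hb : (u / INR (S i)) ^ (S i) <= x).
  { assert (ex : exp u = x) by (unfold u; apply exp_ln; auto). rewrite <- ex. apply exp_ge_pow; lra. }
  assert (hS : 0 < INR (S i)) by (apply lt_0_INR; lia).
  assert (hp : 0 < (u / INR (S i)) ^ (S i)) by (apply pow_lt, Rdiv_lt_0_compat; auto).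
  rewrite Rminus_0_r, Rabs_right.
  2: { left. apply Rdiv_lt_0_compat; auto. apply pow_lt; auto. }
  apply Rle_lt_trans with (u ^ i / ((u / INR (S i)) ^ S i)).
  { apply Rmult_le_compat_l. left; apply pow_lt; auto.
    apply Rinv_le_contravar; auto. }
  replace (u ^ i / (u / INR (S i)) ^ S i) with (K / u).
  2: { unfold K. unfold Rdiv. rewrite Rpow_mult_distr, pow_inv. rewrite <- !tech_pow_Rmult.
        assert (u ^ i <> 0) by (apply pow_nonzero; lra).
        assert (INR (S i) ^ i <> 0) by (apply pow_nonzero; lra).
        field. repeat split; lra. }
  apply Rlt_le_trans with (K / (K / eps)).
  { unfold Rdiv at 1 2. apply Rmult_lt_compat_l; auto. apply Rinv_lt_contravar; auto.
    apply Rmult_lt_0_compat; auto. apply Rdiv_lt_0_compat; auto. }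
  right. field. split; lra.
Qed.


Definition gl (i : nat) (x : R) : R := ln x ^ i / x ^ 2.

Lemma gl_cont i x : 0 < x -> continuous (gl i) x.
Proof. intro h. apply (@ex_derive_continuous R_AbsRing R_NormedModule). unfold gl. auto_derive. side. Qed.

Lemma gl_ex i a b : 0 < a -> 0 < b -> ex_RInt (gl i) a b.
Proof.
  intros ha hb. apply (@ex_RInt_continuous R_CompleteNormedModule). intros z hz. apply gl_cont.
  destruct hz as [hz _]. apply Rlt_le_trans with (2 := hz).
  unfold Rmin; destruct Rle_dec; lra.
Qed.

Definition Gint i b := RInt (gl i) 1 b.

Lemma Gint_is i b : 1 <= b -> is_RInt (gl i) 1 b (Gint i b).
Proof. intro h. apply (@RInt_correct R_CompleteNormedModule), gl_ex; lra. Qed.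

Lemma gl_nonneg i x : 1 <= x -> 0 <= gl i x.
Proof.
  intro h. unfold gl. apply Rmult_le_pos. apply pow_le.
  rewrite <- ln_1. apply ln_le; lra.
  left. apply Rinv_0_lt_compat. apply pow_lt. lra.
Qed.

Lemma Gint_mono i a b : 1 <= a <= b -> Gint i a <= Gint i b.
Proof.
  intros [h1 h2]. unfold Gint. rewrite <- (RInt_Chasles (gl i) 1 a b).
  2,3: apply gl_ex; lra.
  assert (0 <= RInt (gl i) a b).
  { apply RInt_ge_0; auto. apply gl_ex; lra. intros x hx. apply gl_nonneg; lra. }
  simpl. unfold plus; simpl. lra.
Qed.

Lemma Gint_0 b : 1 <= b -> Gint 0 b = 1 - 1 / b.
Proof.
  intro hb. apply (@is_RInt_unique R_CompleteNormedModule).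
  assert (H : is_RInt (gl 0) 1 b (minus ((fun x => - (1 / x)) b) ((fun x => - (1/x)) 1))).
  { apply (@is_RInt_derive R_CompleteNormedModule (fun x => - (1/x))).
    - intros x hx. assert (0 < x) by (unfold Rmin in hx; destruct Rle_dec in hx; lra).
      unfold gl. auto_derive. side. field. lra.
    - intros x hx. apply gl_cont. unfold Rmin in hx; destruct Rle_dec in hx; lra. }
  unfold minus, plus, opp in H; simpl in H. replace (1 - 1/b) with (- (1 / b) + - - (1 / 1)) by (field; lra).
  exact H.
Qed.

Lemma Gint_S i b : 1 <= b -> Gint (S i) b = - (ln b ^ S i / b) + INR (S i) * Gint i b.
Proof.
  intro hb.
  assert (H : is_RInt (fun x => gl (S i) x - INR (S i) * gl i x) 1 b
               (minus ((fun x => - (ln x ^ S i / x)) b) ((fun x => - (ln x ^ S i / x)) 1))).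
  { apply (@is_RInt_derive R_CompleteNormedModule (fun x => - (ln x ^ S i / x))).
    - intros x hx. assert (0 < x) by (unfold Rmin in hx; destruct Rle_dec in hx; lra).
      unfold gl. auto_derive. side.
      change (match i with | 0%nat => 1 | S _ => INR i + 1 end) with (INR (S i)).
      simpl. field. lra.
    - intros x hx. assert (0 < x) by (unfold Rmin in hx; destruct Rle_dec in hx; lra).
      apply (@ex_derive_continuous R_AbsRing R_NormedModule). unfold gl. auto_derive. side. }
  assert (H2 := is_RInt_scal _ _ _ (INR (S i)) _ (Gint_is i b hb)).
  assert (H3 := is_RInt_plus _ _ _ _ _ _ H H2).
  assert (H4 : is_RInt (gl (S i)) 1 b (plus (minus ((fun x : R => - (ln x ^ S i / x)) b)
       ((fun x : R => - (ln x ^ S i / x)) 1)) (scal (INR (S i)) (Gint i b)))).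
  { eapply is_RInt_ext; [|exact H3].
    intros x _. unfold plus, scal; simpl. unfold mult; simpl. ring. }
  apply (@is_RInt_unique R_CompleteNormedModule) in H4. unfold Gint at 1. rewrite H4.
  rewrite ln_1. unfold minus, plus, opp, scal; simpl. unfold mult; simpl. field. lra.
Qed.

Lemma islim_eq (f : R -> R) l :
  is_lim f p_infty (Finite l) <-> filterlim f (Rbar_locally p_infty) (locally l).
Proof. split; intro h; exact h. Qed.

Lemma Gint_lim i : filterlim (Gint i) (Rbar_locally p_infty) (locally (INR (fact i))).
Proof.
  apply islim_eq. induction i.
  - apply (is_lim_ext_loc (fun b => 1 - ln b ^ 0 / b) _ p_infty (Finite (INR (fact 0)))).
    + exists 1. intros x hx. rewrite Gint_0 by lra. simpl. auto.
    + replace (INR (fact 0)) with (1 - 0) by (simpl; ring).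
      apply is_lim_minus'. apply is_lim_const. apply islim_eq, lnlim.
  - apply (is_lim_ext_loc (fun b => - (ln b ^ S i / b) + INR (S i) * Gint i b) _ p_infty (Finite (INR (fact (S i))))).
    + exists 1. intros x hx. rewrite Gint_S by lra. auto.
    + replace (INR (fact (S i))) with (- 0 + INR (S i) * INR (fact i))
        by (rewrite fact_simpl, mult_INR; ring).
      apply is_lim_plus'.
      * apply (is_lim_opp _ _ (Finite 0)). apply islim_eq, lnlim.
      * apply (is_lim_scal_l _ _ _ (Finite (INR (fact i)))). exact IHi.
Qed.


Lemma Gint_gen i : is_RInt_gen (gl i) (at_point 1) (Rbar_locally p_infty) (INR (fact i)).
Proof. apply gen_of_lim with (F := Gint i). apply Gint_is. apply Gint_lim. Qed.

Lemma Gint_le i b : 1 <= b -> Gint i b <= INR (fact i).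
Proof. apply le_lim. apply Gint_mono. apply Gint_lim. Qed.

Definition fl (p i : nat) (x : R) : R := fracpart x ^ p * gl i x.

Lemma fl_piece p i (k : nat) a b : (1 <= k)%nat -> INR k <= a -> a <= b -> b <= INR k + 1 ->
  ex_RInt (fl p i) a b.
Proof.
  intros hk h1 h2 h3.
  assert (hk' : 1 <= INR k) by (apply (le_INR 1); auto).
  apply (@ex_RInt_ext R_NormedModule) with (f := fun x => (x - INR k) ^ p * gl i x).
  - intros x hx. rewrite Rmin_left in hx by lra. rewrite Rmax_right in hx by lra.
    unfold fl. rewrite (frac_eq k) by lra. auto.
  - apply (@ex_RInt_continuous R_CompleteNormedModule). intros z hz.
    rewrite Rmin_left in hz by lra. rewrite Rmax_right in hz by lra.
    apply (@ex_derive_continuous R_AbsRing R_NormedModule). unfold gl. auto_derive. side.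
Qed.

Lemma fl_ex_n p i (n : nat) : forall b, 1 <= b <= INR n + 1 -> ex_RInt (fl p i) 1 b.
Proof.
  induction n; intros b hb.
  - simpl in hb. replace b with 1 by lra. apply ex_RInt_point.
  - destruct (Rle_dec b (INR n + 1)) as [h|h].
    + apply IHn. lra.
    + apply (@ex_RInt_Chasles R_NormedModule) with (b := INR (S n)).
      * apply IHn. rewrite S_INR. generalize (pos_INR n); lra.
      * apply (fl_piece p i (S n)); try lia; rewrite ?S_INR in *; lra.
Qed.

Lemma fl_ex p i b : 1 <= b -> ex_RInt (fl p i) 1 b.
Proof.
  intro hb. destruct (archimed b) as [h1 h2].
  apply fl_ex_n with (n := Z.to_nat (up b)). split; auto.
  rewrite INR_IZR_INZ, Z2Nat.id. lra.
  apply le_IZR. simpl. lra.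
Qed.

Lemma pow_le_one y (p : nat) : 0 <= y <= 1 -> y ^ p <= 1.
Proof.
  intro h. induction p. simpl; lra.
  simpl. rewrite <- (Rmult_1_l 1). apply Rmult_le_compat; try lra. apply pow_le; lra.
Qed.

Lemma fl_bounds p i x : 1 <= x -> 0 <= fl p i x <= gl i x.
Proof.
  intro hx. destruct (frac_bounds x) as [f1 f2].
  assert (g0 := gl_nonneg i x hx). unfold fl. split.
  - apply Rmult_le_pos; auto. apply pow_le; auto.
  - rewrite <- (Rmult_1_l (gl i x)) at 2. apply Rmult_le_compat_r; auto.
    apply pow_le_one. lra.
Qed.

Definition Flint p i b := RInt (fl p i) 1 b.

Lemma Flint_is p i b : 1 <= b -> is_RInt (fl p i) 1 b (Flint p i b).
Proof. intro h. apply (@RInt_correct R_CompleteNormedModule), fl_ex; lra. Qed.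

Lemma Flint_mono p i a b : 1 <= a <= b -> Flint p i a <= Flint p i b.
Proof.
  intros [h1 h2]. unfold Flint.
  assert (ex : ex_RInt (fl p i) a b).
  { apply (@ex_RInt_Chasles_2 R_CompleteNormedModule) with 1. lra. apply fl_ex; lra. }
  rewrite <- (RInt_Chasles (fl p i) 1 a b); auto. 2: apply fl_ex; lra.
  assert (0 <= RInt (fl p i) a b).
  { apply RInt_ge_0; auto. intros x hx. apply fl_bounds; lra. }
  simpl. unfold plus; simpl. lra.
Qed.

Lemma Flint_bound p i b : 1 <= b -> Flint p i b <= INR (fact i).
Proof.
  intro hb. apply Rle_trans with (Gint i b); [|apply Gint_le; auto].
  unfold Flint, Gint. apply RInt_le; auto. apply fl_ex; auto. apply gl_ex; lra.
  intros x hx. apply fl_bounds; lra.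
Qed.

Definition Aval p i := real (Lim (Flint p i) p_infty).

Lemma Flint_lim p i : filterlim (Flint p i) (Rbar_locally p_infty) (locally (Aval p i)).
Proof.
  destruct (lim_mono (Flint p i) (INR (fact i))) as [l hl].
  apply Flint_mono. apply Flint_bound.
  unfold Aval. rewrite (is_lim_unique (Flint p i) p_infty l); auto.
Qed.

Lemma Aval_gen p i : is_RInt_gen (fl p i) (at_point 1) (Rbar_locally p_infty) (Aval p i).
Proof. apply gen_of_lim with (F := Flint p i). apply Flint_is. apply Flint_lim. Qed.

Lemma Aval_nonneg p i : 0 <= Aval p i.
Proof.
  apply Rle_trans with (Flint p i 1).
  - unfold Flint. rewrite RInt_point. right; auto.
  - apply le_lim. apply Flint_mono. apply Flint_lim. lra.
Qed.


Lemma Gder (j:nat) k x : 0 < x -> is_derive (fun x => (x - k) * (ln x ^ j / x) - ln x ^ (S j) / INR (S j)) x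
  ((x - k) * (INR j * gl (pred j) x - gl j x)).
Proof.
intros. unfold gl. destruct j.
- auto_derive. side. simpl. field. lra.
- auto_derive. side.
  change (match j with | 0%nat => 1 | S _ => INR j + 1 end) with (INR (S j)).
  change (match S j with | 0%nat => 1 | S _ => INR (S j) + 1 end) with (INR (S (S j))).
  simpl pred.
  assert (INR (S (S j)) <> 0) by (apply not_0_INR; congruence).
  assert (INR (S j) <> 0) by (apply not_0_INR; congruence).
  rewrite <- !tech_pow_Rmult. field. split; auto; lra.
Qed.

Definition sf (j : nat) (x : R) := INR j * fl 1 (pred j) x - fl 1 j x.
Definition Sint j b := INR j * Flint 1 (pred j) b - Flint 1 j b.

Lemma Sint_is j b : 1 <= b -> is_RInt (sf j) 1 b (Sint j b).
Proof.
  intro hb.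
  assert (H := is_RInt_minus _ _ _ _ _ _ (is_RInt_scal _ _ _ (INR j) _ (Flint_is 1 (pred j) b hb))
                 (Flint_is 1 j b hb)).
  eapply is_RInt_ext; [|exact H]. intros x _. unfold sf, minus, plus, opp, scal; simpl.
  unfold mult; simpl. ring.
Qed.

Lemma Sint_piece j (k : nat) : (1 <= k)%nat ->
  is_RInt (sf j) (INR k) (INR k + 1)
    (ln (INR k + 1) ^ j / (INR k + 1) - ln (INR k + 1) ^ S j / INR (S j) + ln (INR k) ^ S j / INR (S j)).
Proof.
  intro hk. assert (hk' : 1 <= INR k) by (apply (le_INR 1); auto).
  set (G := fun x => (x - INR k) * (ln x ^ j / x) - ln x ^ (S j) / INR (S j)).
  assert (H : is_RInt (fun x => (x - INR k) * (INR j * gl (pred j) x - gl j x)) (INR k) (INR k + 1)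
                 (minus (G (INR k + 1)) (G (INR k)))).
  { apply (@is_RInt_derive R_CompleteNormedModule G).
    - intros x hx. rewrite Rmin_left in hx by lra. rewrite Rmax_right in hx by lra.
      apply Gder. lra.
    - intros x hx. rewrite Rmin_left in hx by lra. rewrite Rmax_right in hx by lra.
      apply (@ex_derive_continuous R_AbsRing R_NormedModule). unfold gl. auto_derive. side. }
  eapply is_RInt_ext.
  2: { replace (ln (INR k + 1) ^ j / (INR k + 1) - ln (INR k + 1) ^ S j / INR (S j) + ln (INR k) ^ S j / INR (S j))
         with (minus (G (INR k + 1)) (G (INR k))). exact H.
       unfold G, minus, plus, opp; simpl.
       change (match j with | 0%nat => 1 | S _ => INR j + 1 end) with (INR (S j)).
       field. split; [apply not_0_INR; lia| lra]. }
  intros x hx. rewrite Rmin_left in hx by lra. rewrite Rmax_right in hx by lra.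
  unfold sf, fl. rewrite (frac_eq k x) by lra. match goal with |- ?a = ?b => change (@eq R a b) end. ring.
Qed.

Lemma stieltjes_seq_eq j n : stieltjes_seq j n = kdelta j 0 + Sint j (INR (n + 1)).
Proof.
  induction n as [|n IHN].
  - unfold stieltjes_seq, Sint, Flint. rewrite !RInt_point. unfold zero; simpl sum_f_R0.
    rewrite Nat.add_0_l. replace (INR 1) with 1 by reflexivity. rewrite ln_1.
    rewrite (pow_i (j+1)) by lia. unfold Rdiv. rewrite Rmult_0_l.
    unfold kdelta. destruct j; simpl; field.
  - assert (hk : (1 <= n + 1)%nat) by lia.
    assert (hk' : 1 <= INR (n + 1)) by (apply (le_INR 1); auto).
    assert (E : INR (S n + 1) = INR (n + 1) + 1) by (rewrite <- S_INR; f_equal; lia).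
    assert (H := is_RInt_Chasles _ _ _ _ _ _ (Sint_is j _ hk') (Sint_piece j _ hk)).
    rewrite <- E in H.
    apply (@is_RInt_unique R_CompleteNormedModule) in H.
    rewrite (is_RInt_unique _ _ _ _ (Sint_is j (INR (S n + 1)) ltac:(lra))) in H.
    unfold stieltjes_seq in *. simpl sum_f_R0.
    replace (S n + 1)%nat with (S (n + 1)) in * by lia.
    rewrite H. unfold plus; simpl.
    replace (j + 1)%nat with (S j) in * by lia.
    rewrite Nat.add_1_r in *. rewrite S_INR in *. simpl in IHN |- *.
    lra.
Qed.

Lemma INR_S_lim : filterlim (fun n : nat => INR (n + 1)) eventually (Rbar_locally p_infty).
Proof.
  assert (H : is_lim_seq (fun n => INR (S n)) p_infty) by (apply (is_lim_seq_incr_1 INR), is_lim_seq_INR).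
  eapply is_lim_seq_ext; [|exact H]. intro n. rewrite Nat.add_1_r. reflexivity.
Qed.

Lemma stieltjes_eq j : stieltjes j = kdelta j 0 + (INR j * Aval 1 (pred j) - Aval 1 j).
Proof.
  unfold stieltjes.
  assert (H : is_lim_seq (stieltjes_seq j) (kdelta j 0 + (INR j * Aval 1 (pred j) - Aval 1 j))).
  { eapply is_lim_seq_ext. intro n. symmetry. apply stieltjes_seq_eq.
    apply is_lim_seq_plus'. apply is_lim_seq_const.
    change (is_lim_seq (fun n => Sint j (INR (n + 1))) (INR j * Aval 1 (pred j) - Aval 1 j)).
    unfold Sint. apply is_lim_seq_minus'.
    - apply is_lim_seq_scal_l with (lu := Finite (Aval 1 (pred j))).
      eapply filterlim_comp. apply INR_S_lim. apply Flint_lim.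
    - eapply filterlim_comp. apply INR_S_lim. apply Flint_lim. }
  rewrite (is_lim_seq_unique _ _ H). reflexivity.
Qed.

Definition Av i := Aval 1 i.

Lemma sum_gamma M : sum_f_R0 (fun j => stieltjes j / INR (fact j)) M = 1 - Av M / INR (fact M).
Proof.
  induction M.
  - simpl. rewrite stieltjes_eq. unfold kdelta, Av. simpl. field.
  - simpl sum_f_R0. rewrite IHM, stieltjes_eq. unfold kdelta, Av. simpl pred.
    replace (Nat.eqb (S M) 0) with false by reflexivity.
    rewrite fact_simpl, mult_INR.
    assert (INR (fact M) <> 0) by (apply not_0_INR, fact_neq_0).
    assert (INR (S M) <> 0) by (apply not_0_INR; lia).
    replace (INR (fact M + M * fact M)) with (INR (S M) * INR (fact M)) by (rewrite <- mult_INR; reflexivity). field. auto.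
Qed.

Definition D (l : nat) (f : nat -> R) := sum_f_R0 (fun j => Binomial.C l j * (-1) ^ (l - j) * f j) l.

Lemma C_n0 n : Binomial.C n 0 = 1.
Proof. unfold Binomial.C. rewrite Nat.sub_0_r. simpl. field. apply not_0_INR, fact_neq_0. Qed.

Lemma C_nn n : Binomial.C n n = 1.
Proof. unfold Binomial.C. rewrite Nat.sub_diag. simpl. field. apply not_0_INR, fact_neq_0. Qed.

Lemma sum_opp f n : sum_f_R0 (fun i => - f i) n = - sum_f_R0 f n.
Proof. induction n; simpl; [ring| rewrite IHn; ring]. Qed.

Lemma D_step l f : D (S l) f = D l (fun j => f (S j) - f j).
Proof.
  destruct l as [|l].
  - unfold D. simpl. rewrite C_n0, C_nn, C_n0. ring.
  - unfold D. rewrite (decomp_sum _ (S (S l))) by lia. simpl pred.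
    rewrite C_n0.
    rewrite (sum_eq (fun j => Binomial.C (S l) j * (-1) ^ (S l - j) * (f (S j) - f j))
                    (fun j => Binomial.C (S l) j * (-1) ^ (S l - j) * f (S j) - Binomial.C (S l) j * (-1) ^ (S l - j) * f j))
      by (intros; ring).
    rewrite minus_sum.
    rewrite (decomp_sum (fun j => Binomial.C (S l) j * (-1) ^ (S l - j) * f j) (S l)) by lia. simpl pred.
    rewrite C_n0.
    rewrite tech5.
    rewrite (sum_eq (fun i => Binomial.C (S (S l)) (S i) * (-1) ^ (S (S l) - S i) * f (S i))
                    (fun i => Binomial.C (S l) i * (-1) ^ (S l - i) * f (S i) + Binomial.C (S l) (S i) * (-1) ^ (S l - i) * f (S i))).
    2: { intros i hi. rewrite <- pascal by lia. replace (S (S l) - S i)%nat with (S l - i)%nat by lia. ring. }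
    rewrite plus_sum.
    rewrite (sum_eq (fun i => Binomial.C (S l) (S i) * (-1) ^ (S l - i) * f (S i))
                    (fun i => - (Binomial.C (S l) (S i) * (-1) ^ (l - i) * f (S i)))).
    2: { intros i hi. replace (S l - i)%nat with (S (l - i)) by lia. simpl. ring. }
    rewrite sum_opp.
    rewrite (tech5 (fun j => Binomial.C (S l) j * (-1) ^ (S l - j) * f (S j))).
    rewrite C_nn, Nat.sub_diag.
    replace (S (S l) - 0)%nat with (S (S l)) by lia. replace (S l - 0)%nat with (S l) by lia.
    simpl (_ ^ S (S l)). simpl (_ ^ S l). simpl (_ ^ 0).
    rewrite C_nn, Nat.sub_diag. change (fun i => Binomial.C (S l) (S i) * (-1) ^ (S l - S i) * f (S i)) with (fun i => Binomial.C (S l) (S i) * (-1) ^ (l - i) * f (S i)). simpl (_ ^ 0). ring.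
Qed.

Lemma D_ext l f g : (forall j, f j = g j) -> D l f = D l g.
Proof. intro h. unfold D. apply sum_eq. intros; rewrite h; auto. Qed.

Lemma D_scal l a f : D l (fun j => a * f j) = a * D l f.
Proof. unfold D. rewrite scal_sum. apply sum_eq. intros; ring. Qed.

Lemma D_zero l : D l (fun _ => 0) = 0.
Proof.
  unfold D. rewrite (sum_eq _ (fun _ => 0)) by (intros; ring).
  generalize l at 1. induction l0; simpl; try rewrite IHl0; ring.
Qed.

Definition P (c k j : nat) : R := INR (fact (c + k + j)) / INR (fact (c + j)).

Lemma fact_pos_R n : INR (fact n) <> 0.
Proof. apply not_0_INR, fact_neq_0. Qed.

Lemma P0 c j : P c 0 j = 1.
Proof. unfold P. rewrite Nat.add_0_r. field. apply fact_pos_R. Qed.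

Lemma P_diff c k j : P c (S k) (S j) - P c (S k) j = INR (S k) * P (S c) k j.
Proof.
  unfold P.
  replace (c + S k + S j)%nat with (S (S ((c + j) + k))) by lia.
  replace (c + S k + j)%nat with (S ((c + j) + k)) by lia.
  replace (c + S j)%nat with (S (c + j)) by lia.
  replace (S c + k + j)%nat with (S ((c + j) + k)) by lia.
  replace (S c + j)%nat with (S (c + j)) by lia.
  set (n := (c + j)%nat).
  rewrite !fact_simpl, !mult_INR.
  assert (INR (fact n) <> 0) by apply fact_pos_R.
  assert (INR (S n) <> 0) by (apply not_0_INR; lia).
  rewrite !S_INR, !plus_INR. rewrite !S_INR in H0. field. split; auto.
Qed.

Lemma D_P_lt l : forall c k, (k < l)%nat -> D l (P c k) = 0.
Proof.
  induction l; intros c k hk. lia.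
  rewrite D_step. destruct k.
  - rewrite (D_ext _ _ (fun _ => 0)). apply D_zero. intro j. rewrite !P0. ring.
  - rewrite (D_ext _ _ (fun j => INR (S k) * P (S c) k j)). 2: intro j; apply P_diff.
    rewrite D_scal, IHl by lia. ring.
Qed.

Lemma D_P_eq l : forall c, D l (P c l) = INR (fact l).
Proof.
  induction l; intros c.
  - unfold D. simpl. rewrite P0, C_n0. ring.
  - rewrite D_step. rewrite (D_ext _ _ (fun j => INR (S l) * P (S c) l j)). 2: intro j; apply P_diff.
    rewrite D_scal, IHl, fact_simpl, mult_INR. ring.
Qed.

Lemma sum_trunc f l N : (l <= N)%nat -> (forall j, (l < j)%nat -> f j = 0) ->
  sum_f_R0 f N = sum_f_R0 f l.
Proof.
  intros hl h. induction N.
  - replace l with 0%nat by lia. auto.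
  - destruct (Nat.eq_dec l (S N)). subst; auto.
    simpl. rewrite IHN by lia. rewrite (h (S N)) by lia. ring.
Qed.

Lemma sum_zero f n : (forall k, (k <= n)%nat -> f k = 0) -> sum_f_R0 f n = 0.
Proof.
  intro h. induction n. simpl; apply h; lia.
  simpl. rewrite IHn by (intros; apply h; lia). rewrite h by lia. ring.
Qed.

Lemma sum_last f n : (forall k, (k < n)%nat -> f k = 0) -> sum_f_R0 f n = f n.
Proof.
  intro h. destruct n. reflexivity.
  simpl. rewrite sum_zero by (intros; apply h; lia). ring.
Qed.

Lemma sum_swap (u : nat -> nat -> R) N M :
  sum_f_R0 (fun n => sum_f_R0 (fun k => u n k) M) N = sum_f_R0 (fun k => sum_f_R0 (fun n => u n k) N) M.
Proof.
  induction N.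
  - simpl. auto.
  - simpl. rewrite IHN. rewrite <- plus_sum. apply sum_eq. intros; simpl; auto.
Qed.

Lemma sum_delta (x : nat -> R) n N : (n <= N)%nat ->
  sum_f_R0 (fun l => if Nat.eqb n l then x l else 0) N = x n.
Proof.
  intro h. rewrite (sum_trunc _ n N h).
  - rewrite sum_last. rewrite Nat.eqb_refl. auto.
    intros k hk. destruct (Nat.eqb_spec n k). lia. auto.
  - intros j hj. destruct (Nat.eqb_spec n j). lia. auto.
Qed.

Definition beta (m n k : nat) : R :=
  if (k <=? n)%nat then Binomial.C n k * (-1) ^ (n - k) / INR (fact (m + k)) else 0.

Lemma inner_eq m k l N : (l <= N)%nat ->
  sum_f_R0 (fun j => beta m l j * INR (fact (m + k + j))) N = D l (P m k).
Proof.
  intro hl. rewrite (sum_trunc _ l N hl).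
  - unfold D. apply sum_eq. intros j hj. unfold beta, P.
    replace (j <=? l)%nat with true by (symmetry; apply Nat.leb_le; auto).
    field. apply fact_pos_R.
  - intros j hj. unfold beta. replace (j <=? l)%nat with false by (symmetry; apply Nat.leb_gt; auto). ring.
Qed.

Definition G (m N n l : nat) : R :=
  sum_f_R0 (fun k => sum_f_R0 (fun j => beta m n k * beta m l j * INR (fact (m + k + j))) N) N.

Lemma G_sym m N n l : G m N n l = G m N l n.
Proof.
  unfold G. rewrite sum_swap. apply sum_eq. intros. apply sum_eq. intros.
  replace (m + i0 + i)%nat with (m + i + i0)%nat by lia. ring.
Qed.

Lemma G_le m N n l : (n <= l)%nat -> (l <= N)%nat ->
  G m N n l = if Nat.eqb n l then INR (fact n) / INR (fact (n + m)) else 0.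
Proof.
  intros h1 h2. unfold G.
  rewrite (sum_eq _ (fun k => beta m n k * D l (P m k))).
  2: { intros k hk. rewrite <- inner_eq with (N := N) by auto. rewrite scal_sum. apply sum_eq. intros; ring. }
  rewrite (sum_trunc _ n N) by (auto; lia || (intros j hj; unfold beta; replace (j <=? n)%nat with false by (symmetry; apply Nat.leb_gt; auto); ring)).
  destruct (Nat.eqb_spec n l).
  - subst l. rewrite sum_last.
    + rewrite D_P_eq. unfold beta. rewrite Nat.leb_refl, C_nn, Nat.sub_diag, Nat.add_comm. simpl. field. apply fact_pos_R.
    + intros k hk. rewrite D_P_lt by auto. ring.
  - apply sum_zero. intros k hk. rewrite D_P_lt by lia. ring.
Qed.

Lemma G_val m N n l : (n <= N)%nat -> (l <= N)%nat ->
  G m N n l = if Nat.eqb n l then INR (fact n) / INR (fact (n + m)) else 0.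
Proof.
  intros h1 h2. destruct (Nat.le_ge_cases n l).
  - apply G_le; auto.
  - rewrite G_sym, G_le by auto. destruct (Nat.eqb_spec l n), (Nat.eqb_spec n l); subst; auto; lia.
Qed.

Definition cc (m : nat) (a : nat -> R) (N k : nat) : R := sum_f_R0 (fun n => a n * beta m n k) N.

Definition Quad (m : nat) (c : nat -> R) (N : nat) : R :=
  sum_f_R0 (fun k => sum_f_R0 (fun j => c k * c j * INR (fact (m + k + j))) N) N.

Lemma Quad_eq m a N :
  Quad m (cc m a N) N = sum_f_R0 (fun n => a n * a n * (INR (fact n) / INR (fact (n + m)))) N.
Proof.
  set (T := fun k j n l => a n * a l * (beta m n k * beta m l j * INR (fact (m + k + j)))).
  transitivity (sum_f_R0 (fun k => sum_f_R0 (fun j => sum_f_R0 (fun n => sum_f_R0 (fun l => T k j n l) N) N) N) N).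
  { unfold Quad, cc. apply sum_eq; intros k _. apply sum_eq; intros j _.
    set (Y := sum_f_R0 (fun n0 => a n0 * beta m n0 j) N).
    set (F := INR (fact (m + k + j))).
    rewrite Rmult_assoc, (Rmult_comm (sum_f_R0 _ N)), scal_sum. apply sum_eq; intros n _.
    replace (a n * beta m n k * (Y * F)) with ((a n * beta m n k * F) * Y) by ring.
    unfold Y. rewrite scal_sum. apply sum_eq; intros l _.
    unfold T, F. ring. }
  transitivity (sum_f_R0 (fun n => sum_f_R0 (fun l => a n * a l * G m N n l) N) N).
  2: { apply sum_eq; intros n hn. rewrite (sum_eq _ (fun l => if Nat.eqb n l then a n * a l * (INR (fact n) / INR (fact (n + m))) else 0)).
       apply (sum_delta (fun l => a n * a l * (INR (fact n) / INR (fact (n + m))))); auto.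
       intros l hl. rewrite G_val by auto. destruct (Nat.eqb n l); ring. }
  transitivity (sum_f_R0 (fun k => sum_f_R0 (fun n => sum_f_R0 (fun j => sum_f_R0 (fun l => T k j n l) N) N) N) N).
  { apply sum_eq; intros k _. apply (sum_swap (fun j n => sum_f_R0 (fun l => T k j n l) N)). }
  rewrite (sum_swap (fun k n => sum_f_R0 (fun j => sum_f_R0 (fun l => T k j n l) N) N)).
  apply sum_eq; intros n _.
  transitivity (sum_f_R0 (fun k => sum_f_R0 (fun l => sum_f_R0 (fun j => T k j n l) N) N) N).
  { apply sum_eq; intros k _. apply (sum_swap (fun j l => T k j n l)). }
  rewrite (sum_swap (fun k l => sum_f_R0 (fun j => T k j n l) N)).
  apply sum_eq; intros l _. unfold G. rewrite scal_sum. apply sum_eq; intros k _.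
  rewrite Rmult_comm, scal_sum. apply sum_eq; intros j _. unfold T. ring.
Qed.

Lemma Lin_eq m a N (A : nat -> R) :
  sum_f_R0 (fun n => a n * - sum_f_R0 (fun k => beta m n k * A k) N) N =
  - sum_f_R0 (fun k => cc m a N k * A k) N.
Proof.
  rewrite (sum_eq _ (fun n => - sum_f_R0 (fun k => a n * beta m n k * A k) N)).
  2: { intros n _. rewrite <- Ropp_mult_distr_r. f_equal. rewrite scal_sum. apply sum_eq; intros; ring. }
  rewrite sum_opp. f_equal.
  rewrite (sum_swap (fun n k => a n * beta m n k * A k)).
  apply sum_eq; intros k _. unfold cc. rewrite Rmult_comm, scal_sum. apply sum_eq; intros; ring.
Qed.

Notation IG f l := (@is_RInt_gen R_NormedModule f (at_point 1) (Rbar_locally p_infty) l).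

Lemma IG_plus f g lf lg : IG f lf -> IG g lg -> IG (fun x => f x + g x) (lf + lg).
Proof. intros h1 h2. exact (is_RInt_gen_plus f g lf lg h1 h2). Qed.

Lemma IG_scal f a l : IG f l -> IG (fun x => a * f x) (a * l).
Proof. intro h. exact (is_RInt_gen_scal f a l h). Qed.

Lemma IG_sum (f : nat -> R -> R) (l : nat -> R) N : (forall k, IG (f k) (l k)) ->
  IG (fun x => sum_f_R0 (fun k => f k x) N) (sum_f_R0 l N).
Proof.
  intro h. induction N. simpl. apply h.
  simpl. apply IG_plus; auto.
Qed.

Lemma IG_ext f g l : (forall x, 1 < x -> f x = g x) -> IG f l -> IG g l.
Proof.
  intros h H. eapply is_RInt_gen_ext; [| exact H].
  exists (fun a => a = 1) (fun b => 1 < b). reflexivity. exists 1; auto.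
  intros a b -> hb x hx. simpl in hx. rewrite Rmin_left in hx by lra. apply h. lra.
Qed.

Lemma IG_nonneg f l : (forall x, 1 <= x -> 0 <= f x) -> IG f l -> 0 <= l.
Proof.
  intros h H.
  assert (H0 := is_RInt_gen_scal f 0 l H).
  assert (hn := @RInt_gen_norm R_CompleteNormedModule (at_point 1) (Rbar_locally p_infty) _ _ (fun x => scal 0 (f x)) f (scal 0 l) l).
  assert (norm (scal 0 l) <= l).
  { apply hn; auto.
    - exists (fun a => a = 1) (fun b => 1 < b). reflexivity. exists 1; auto.
      intros a b -> hb. simpl. lra.
    - exists (fun a => a = 1) (fun b => 1 < b). reflexivity. exists 1; auto.
      intros a b -> hb x hx. simpl in hx. unfold scal, norm; simpl. unfold mult, abs; simpl.
      rewrite Rmult_0_l, Rabs_R0. apply h. lra. }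
  unfold scal, norm in H1; simpl in H1. unfold mult, abs in H1; simpl in H1.
  rewrite Rmult_0_l, Rabs_R0 in H1. auto.
Qed.

Lemma quad_disc a b c : (forall t, 0 <= c + 2 * b * t + a * t ^ 2) -> b ^ 2 <= a * c.
Proof.
  intro h.
  assert (hc : 0 <= c) by (generalize (h 0); simpl; lra).
  destruct (Rlt_le_dec 0 a) as [ha|ha].
  - generalize (h (- b / a)). intro H.
    replace (c + 2 * b * (- b / a) + a * (- b / a) ^ 2) with (c - b ^ 2 / a) in H by (field; lra).
    assert (0 <= a * c - b ^ 2).
    { replace (a * c - b ^ 2) with (a * (c - b ^ 2 / a)) by (field; lra).
      apply Rmult_le_pos; lra. }
    lra.
  - destruct (Req_dec b 0) as [hb|hb].
    + subst. assert (0 <= a * c \/ a * c <= 0) by lra.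
      destruct (Req_dec a 0). subst; simpl; lra.
      exfalso. assert (ha' : a < 0) by lra.
      generalize (h (sqrt ((c + 1) / (- a)) + 1)). intro H1.
      set (s := sqrt ((c + 1) / - a)) in *.
      assert (s0 : 0 <= s) by apply sqrt_pos.
      assert (ss : s * s = (c + 1) / - a) by (apply sqrt_sqrt; apply Rmult_le_pos; [lra| left; apply Rinv_0_lt_compat; lra]).
      assert (a * (s * s) = - (c + 1)) by (rewrite ss; field; lra).
      nra.
    + exfalso.
      set (t := - (c + 1) / (2 * b)).
      generalize (h t). intro H1.
      assert (2 * b * t = - (c + 1)) by (unfold t; field; auto).
      assert (a * t ^ 2 <= 0) by (assert (0 <= t ^ 2) by (apply pow2_ge_0); nra).
      lra.
Qed.

Lemma poly_sq_eq (c : nat -> R) N m x :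
  sum_f_R0 (fun k => sum_f_R0 (fun j => c k * c j * gl (m + k + j) x) N) N =
  sum_f_R0 (fun k => c k * ln x ^ k) N * sum_f_R0 (fun k => c k * ln x ^ k) N * gl m x.
Proof.
  set (Pl := sum_f_R0 (fun k => c k * ln x ^ k) N).
  rewrite Rmult_assoc. unfold Pl at 1. rewrite Rmult_comm, scal_sum.
  apply sum_eq; intros k _.
  replace (c k * ln x ^ k * (Pl * gl m x)) with ((c k * ln x ^ k * gl m x) * Pl) by ring.
  unfold Pl. rewrite scal_sum. apply sum_eq; intros j _.
  unfold gl. rewrite !pow_add. unfold Rdiv. ring.
Qed.

Lemma poly_lin_eq (c : nat -> R) N m x :
  sum_f_R0 (fun k => c k * fl 1 (m + k) x) N =
  fracpart x * sum_f_R0 (fun k => c k * ln x ^ k) N * gl m x.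
Proof.
  replace (fracpart x * sum_f_R0 (fun k => c k * ln x ^ k) N * gl m x)
    with ((fracpart x * gl m x) * sum_f_R0 (fun k => c k * ln x ^ k) N) by ring.
  rewrite scal_sum. apply sum_eq; intros k _.
  unfold fl, gl. rewrite !pow_add. unfold Rdiv. ring.
Qed.

Lemma CS m (c : nat -> R) N :
  (sum_f_R0 (fun k => c k * Av (m + k)) N) ^ 2 <= Aval 2 m * Quad m c N.
Proof.
  set (L := sum_f_R0 (fun k => c k * Av (m + k)) N).
  rewrite Rmult_comm. apply quad_disc. intro t.
  set (Pl := fun x => sum_f_R0 (fun k => c k * ln x ^ k) N).
  assert (H1 := Aval_gen 2 m).
  assert (H2 : IG (fun x => sum_f_R0 (fun k => c k * fl 1 (m + k) x) N) L).
  { apply IG_sum. intro k. apply IG_scal. apply Aval_gen. }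
  assert (H3 : IG (fun x => sum_f_R0 (fun k => sum_f_R0 (fun j => c k * c j * gl (m + k + j) x) N) N) (Quad m c N)).
  { apply IG_sum. intro k. apply IG_sum. intro j. apply IG_scal. apply Gint_gen. }
  assert (H := IG_plus _ _ _ _ (IG_plus _ _ _ _ H1 (IG_scal _ (2 * t) _ H2)) (IG_scal _ (t ^ 2) _ H3)).
  replace (Aval 2 m + 2 * L * t + Quad m c N * t ^ 2) with (Aval 2 m + 2 * t * L + t ^ 2 * Quad m c N) by ring.
  apply IG_nonneg with (f := fun x => (fracpart x + t * Pl x) ^ 2 * gl m x).
  - intros x hx. apply Rmult_le_pos. apply pow2_ge_0. apply gl_nonneg; auto.
  - eapply IG_ext; [|exact H]. intros x hx. simpl.
    rewrite poly_lin_eq, poly_sq_eq. unfold fl, Pl. ring.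
Qed.

Lemma binom_alt n : sum_f_R0 (fun k => Binomial.C n k * (-1) ^ (n - k)) n = kdelta n 0.
Proof.
  rewrite (sum_eq _ (fun k => Binomial.C n k * 1 ^ k * (-1) ^ (n - k))) by (intros; rewrite pow1; ring).
  rewrite <- binomial. replace (1 + -1) with 0 by ring.
  unfold kdelta. destruct n; simpl; ring.
Qed.

Lemma ell_eq0 m n : ell m n = - sum_f_R0 (fun k => Binomial.C n k * (-1) ^ (n - k) * (Av (m + k) / INR (fact (m + k)))) n.
Proof.
  unfold ell.
  rewrite (sum_eq _ (fun k => Binomial.C n k * (-1) ^ (n - k) - Binomial.C n k * (-1) ^ (n - k) * (Av (m + k) / INR (fact (m + k))))).
  2: { intros k _. rewrite sum_gamma. ring. }
  rewrite minus_sum, binom_alt. ring.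
Qed.

Lemma ell_eq m n N : (n <= N)%nat -> ell m n = - sum_f_R0 (fun k => beta m n k * Av (m + k)) N.
Proof.
  intro h. rewrite ell_eq0. f_equal. rewrite (sum_trunc _ n N h).
  - apply sum_eq. intros k hk. unfold beta. replace (k <=? n)%nat with true by (symmetry; apply Nat.leb_le; auto).
    unfold Rdiv. ring.
  - intros j hj. unfold beta. replace (j <=? n)%nat with false by (symmetry; apply Nat.leb_gt; auto). ring.
Qed.

Definition Sb (m : nat) (x : R) (N : nat) := sum_f_R0 (fun n => Binomial.C (n + m) n * x ^ n) N.

Lemma Sb_rec m x N : (1 - x) * Sb (S m) x N + Binomial.C (N + S m) N * x ^ (S N) = Sb m x N.
Proof.
  induction N.
  - unfold Sb. simpl. rewrite !C_n0. ring.
  - unfold Sb in *. simpl sum_f_R0.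
    rewrite <- IHN.
    assert (E : Binomial.C (S (N + S m)) (S N) = Binomial.C (N + S m) N + Binomial.C (S (N + m)) (S N)).
    { rewrite <- pascal by lia. f_equal. f_equal. lia. }
    simpl. rewrite E. ring.
Qed.

Lemma C_nonneg n k : 0 <= Binomial.C n k.
Proof. unfold Binomial.C. apply Rmult_le_pos. apply pos_INR. left. apply Rinv_0_lt_compat.
  apply Rmult_lt_0_compat; apply lt_0_INR, Nat.neq_0_lt_0, fact_neq_0. Qed.

Lemma Sb_bound m x N : 0 <= x < 1 -> Sb m x N <= / (1 - x) ^ (S m).
Proof.
  intro hx. revert N. induction m; intro N.
  - unfold Sb. rewrite (sum_eq _ (fun n => x ^ n)) by (intros; rewrite Nat.add_0_r, C_nn; ring).
    rewrite tech3 by lra.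
    assert (0 <= x ^ S N) by (apply pow_le; lra).
    replace (/ (1 - x) ^ 1) with (1 * / (1 - x)) by (simpl; field; lra).
    unfold Rdiv. apply Rmult_le_compat_r. left; apply Rinv_0_lt_compat; lra. lra.
  - assert (H := Sb_rec m x N).
    assert (0 <= Binomial.C (N + S m) N * x ^ S N) by (apply Rmult_le_pos; [apply C_nonneg| apply pow_le; lra]).
    assert ((1 - x) * Sb (S m) x N <= / (1 - x) ^ S m) by (specialize (IHm N); lra).
    assert (hp : 0 < (1 - x) ^ S m) by (apply pow_lt; lra).
    replace (/ (1 - x) ^ S (S m)) with (/ (1 - x) ^ S m / (1 - x)) by (rewrite <- (tech_pow_Rmult _ (S m)); field; split; lra).
    apply Rmult_le_reg_l with (1 - x). lra.
    replace ((1 - x) * (/ (1 - x) ^ S m / (1 - x))) with (/ (1 - x) ^ S m) by (field; split; lra). auto.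
Qed.

Lemma Cmod_sq (z : C) : Cmod z ^ 2 = fst z ^ 2 + snd z ^ 2.
Proof. unfold Cmod. apply pow2_sqrt. nra. Qed.

Lemma r_facts (s : C) : 1 / 2 < Re s ->
  0 <= Cmod (Cdiv (Cminus (RtoC 1) s) s) ^ 2 < 1 /\
  / (1 - Cmod (Cdiv (Cminus (RtoC 1) s) s) ^ 2) = Cmod s ^ 2 / (2 * Re s - 1).
Proof.
  intro hs.
  assert (hs0 : s <> RtoC 0).
  { intro e. rewrite e in hs. simpl in hs. lra. }
  rewrite Cmod_div by auto.
  assert (hc : 0 < Cmod s) by (apply Cmod_gt_0; auto).
  assert (E1 : Cmod (Cminus (RtoC 1) s) ^ 2 = (1 - Re s) ^ 2 + Im s ^ 2).
  { rewrite Cmod_sq. unfold Re, Im. simpl. ring. }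
  assert (E2 : Cmod s ^ 2 = Re s ^ 2 + Im s ^ 2) by (rewrite Cmod_sq; auto).
  unfold Rdiv. rewrite Rpow_mult_distr, pow_inv, E1.
  assert (hc2 : 0 < Cmod s ^ 2) by (apply pow_lt; auto).
  split. split.
  - apply Rmult_le_pos. nra. left; apply Rinv_0_lt_compat; auto.
  - apply Rmult_lt_reg_r with (Cmod s ^ 2); auto. rewrite Rmult_assoc, Rinv_l by lra. nra.
  - rewrite E2 in *. field. split. nra. lra.
Qed.

Lemma term_eq m n r : Binomial.C (n + m) n * Rabs (ell m n) * r ^ n =
  ((if Rle_dec 0 (ell m n) then 1 else -1) * Binomial.C (n + m) n * r ^ n) * ell m n.
Proof.
  destruct (Rle_dec 0 (ell m n)).
  - rewrite Rabs_right by lra. ring.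
  - rewrite Rabs_left by lra. ring.
Qed.

Lemma av_sq m n r : ((if Rle_dec 0 (ell m n) then 1 else -1) * Binomial.C (n + m) n * r ^ n) *
   ((if Rle_dec 0 (ell m n) then 1 else -1) * Binomial.C (n + m) n * r ^ n) *
   (INR (fact n) / INR (fact (n + m))) = (Binomial.C (n + m) n * (r ^ 2) ^ n) * / INR (fact m).
Proof.
  assert (E : (n + m - n)%nat = m) by lia.
  unfold Binomial.C. rewrite E.
  assert (INR (fact n) <> 0) by apply fact_pos_R.
  assert (INR (fact m) <> 0) by apply fact_pos_R.
  assert (INR (fact (n + m)) <> 0) by apply fact_pos_R.
  rewrite <- pow_mult. replace (2 * n)%nat with (n + n)%nat by lia. rewrite pow_add.
  destruct (Rle_dec 0 (ell m n)); field; auto.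
Qed.

Theorem mainTheorem10 (m : nat) (s : C) (hs : 1 / 2 < Re s) :
  exists I : R,
    is_RInt_gen (fun x => (fracpart x) ^ 2 * (ln x) ^ m / x ^ 2)
      (at_point 1) (Rbar_locally p_infty) I /\
    let a := fun n : nat =>
      Binomial.C (n + m) n * Rabs (ell m n) *
      (Cmod (Cdiv (Cminus (RtoC 1) s) s)) ^ n in
    ex_series a /\
    Series a <= sqrt (I / INR (Factorial.fact m)) * (Cmod s / sqrt (2 * Re s - 1)) ^ (m + 1).
Proof.
  exists (Aval 2 m). split.
  { eapply IG_ext; [| apply Aval_gen]. intros x _. unfold fl, gl. unfold Rdiv. match goal with |- ?u = ?v => change (@eq R u v) end. ring. }
  intro a.
  set (r := Cmod (Cdiv (Cminus (RtoC 1) s) s)) in *.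
  destruct (r_facts s hs) as [[hr0 hr1] hr2]. fold r in hr0, hr1, hr2.
  set (I := Aval 2 m).
  assert (hI : 0 <= I) by apply Aval_nonneg.
  assert (hf : 0 < INR (fact m)) by (apply lt_0_INR, Nat.neq_0_lt_0, fact_neq_0).
  assert (hd : 0 < 2 * Re s - 1) by lra.
  set (B := sqrt (I / INR (fact m)) * (Cmod s / sqrt (2 * Re s - 1)) ^ (m + 1)).
  assert (hB0 : 0 <= B).
  { unfold B. apply Rmult_le_pos. apply sqrt_pos. apply pow_le. apply Rmult_le_pos.
    apply Cmod_ge_0. left; apply Rinv_0_lt_compat, sqrt_lt_R0; auto. }
  assert (hB2 : B ^ 2 = I / INR (fact m) * / (1 - r ^ 2) ^ (S m)).
  { unfold B. rewrite Rpow_mult_distr, pow2_sqrt.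
    2: { apply Rmult_le_pos; auto. left; apply Rinv_0_lt_compat; auto. }
    rewrite <- pow_inv, hr2, <- pow_mult, Nat.mul_comm, pow_mult.
    replace (S m) with (m + 1)%nat by lia. f_equal. f_equal.
    unfold Rdiv. rewrite Rpow_mult_distr, pow_inv, pow2_sqrt by lra. auto. }
  assert (ha : forall n, 0 <= a n).
  { intro n. unfold a. apply Rmult_le_pos. apply Rmult_le_pos. apply C_nonneg. apply Rabs_pos.
    apply pow_le. unfold r. apply Cmod_ge_0. }
  assert (key : forall N, sum_f_R0 a N <= B).
  { intro N.
    set (av := fun n => (if Rle_dec 0 (ell m n) then 1 else -1) * Binomial.C (n + m) n * r ^ n).
    assert (E1 : sum_f_R0 a N = - sum_f_R0 (fun k => cc m av N k * Av (m + k)) N).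
    { rewrite <- (Lin_eq m av N (fun k => Av (m + k))).
      apply sum_eq. intros n hn. unfold a. rewrite term_eq. fold (av n).
      rewrite (ell_eq m n N hn). auto. }
    assert (E2 := CS m (cc m av N) N). rewrite Quad_eq in E2. fold I in E2.
    rewrite (sum_eq (fun n => av n * av n * (INR (fact n) / INR (fact (n + m)))) (fun n => (Binomial.C (n + m) n * (r ^ 2) ^ n) * / INR (fact m))) in E2.
    2: { intros n _. unfold av. apply (av_sq m n r). }
    rewrite <- scal_sum in E2.
    assert (E3 := Sb_bound m (r ^ 2) N (conj hr0 hr1)). unfold Sb in E3.
    assert (hsq : (sum_f_R0 a N) ^ 2 <= B ^ 2).
    { rewrite E1, hB2. replace ((- sum_f_R0 (fun k => cc m av N k * Av (m + k)) N) ^ 2)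
        with ((sum_f_R0 (fun k => cc m av N k * Av (m + k)) N) ^ 2) by ring.
      eapply Rle_trans. exact E2.
      unfold Rdiv. rewrite Rmult_assoc. apply Rmult_le_compat_l; auto.
      apply Rmult_le_compat_l. left; apply Rinv_0_lt_compat; auto. auto. }
    nra. }
  assert (hpos : forall N, sum_n a N <= sum_n a (S N)).
  { intro N. rewrite !sum_n_Reals. simpl. specialize (ha (S N)). lra. }
  assert (hbd : forall N, sum_n a N <= B) by (intro N; rewrite sum_n_Reals; apply key).
  assert (hex := ex_finite_lim_seq_incr _ _ hpos hbd).
  destruct hex as [l hl].
  split.
  - exists l. exact hl.
  - unfold Series. rewrite (is_lim_seq_unique _ _ hl). simpl.
    assert (H := is_lim_seq_le (sum_n a) (fun _ => B) l B hbd hl (is_lim_seq_const B)).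
    simpl in H. exact H.
Qed.
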